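(* Let $E$ be finite, $\Omega=E^{\mathbb{Z}}$ with left shift $S$, and let $\phi:\Omega\to\mathbb{R}$ be continuous with the extensibility property. Then for every pair $\xi,\eta\in\Omega$ such that $\{k\in\mathbb{Z}:\xi_k\ne\eta_k\}$ is finite, the sequence $\rho_n(\xi,\eta)=\sum_{i=-n}^{n}[\phi(S^i\xi)-\phi(S^i\eta)]$, $n\ge0$, converges; denote the limit by $\rho(\xi,\eta)$. Moreover: (1) $\rho$ is a cocycle: for all $\xi,\eta,\zeta\in\Omega$ with $\xi_i=\eta_i=\zeta_i$ for all but finitely many $i$, $\rho(\xi,\zeta)=\rho(\xi,\eta)+\rho(\eta,\zeta)$; (2) $\rho$ is translation-invariant: $\rho(\xi,\eta)=\rho(S\xi,S\eta)$ whenever $\{k:\xi_k\ne\eta_k\}$ is finite; (3) for every finite $\Lambda\subset\mathbb{Z}$ and all $\eta_\Lambda,\zeta_\Lambda\in E^\Lambda$, the map $\xi\mapsto\rho(\eta_\Lambda\xi_{\mathbb{Z}\setminus\Lambda},\zeta_\Lambda\xi_{\mathbb{Z}\setminus\Lambda})$ is continuous on $\Omega$.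
   Context: $E$ is finite with discrete topology, $\Omega=E^{\mathbb{Z}}$ has the product topology, $(S\omega)_i=\omega_{i+1}$. For $\omega\in\Omega$, $a\in E$, $\omega^a$ is the configuration equal to $a$ at site $0$ and to $\omega_k$ at $k\ne0$. A continuous $\phi$ has the extensibility property if for all $a,\tilde a\in E$ the functions $\sum_{i=-n}^{n}[\phi(S^i\omega^a)-\phi(S^i\omega^{\tilde a})]$ converge uniformly in $\omega\in\Omega$ as $n\to\infty$. For finite $\Lambda$, $\eta_\Lambda\xi_{\mathbb{Z}\setminus\Lambda}$ denotes the configuration equal to $\eta$ on $\Lambda$ and to $\xi$ off $\Lambda$. *)

(* Defs.v *)
From HB Require Import structures.
From mathcomp Require Import all_boot all_order all_algebra.
From mathcomp Require Import all_classical all_reals all_analysis.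
From mathcomp Require Import finmap.
Set Implicit Arguments. Unset Strict Implicit. Unset Printing Implicit Defensive.
Import Order.TTheory GRing.Theory Num.Theory.
Import numFieldNormedType.Exports.
Local Open Scope classical_set_scope.
Local Open Scope ring_scope.

Definition Omega (E : finType) : topologicalType :=
  {ptws int -> discrete_topology E}.

(* S^i for i in Z : (S^i w)_k = w_{k+i}; S = shiftz 1 is the left shift. *)
Definition shiftz (E : finType) (i : int) (w : Omega E) : Omega E :=
  fun k => w (k + i).

Definition upd0 (E : finType) (w : Omega E) (a : E) : Omega E :=
  fun k => if k == 0 then a else w k.

Definition rho_n (R : realType) (E : finType) (phi : Omega E -> R)
    (xi eta : Omega E) (n : nat) : R :=
  \sum_(0 <= j < (2 * n).+1)
     (phi (shiftz (j%:Z - n%:Z) xi) - phi (shiftz (j%:Z - n%:Z) eta)).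

Definition extensible (R : realType) (E : finType) (phi : Omega E -> R) : Prop :=
  forall a a' : E, exists g : Omega E -> R,
    {uniform, (fun n => (fun w : Omega E => rho_n phi (upd0 w a) (upd0 w a') n)) @ \oo --> g}.

Definition glue_cfg (E : finType) (L : {fset int}) (eta : L -> E) (xi : Omega E)
  : Omega E :=
  fun k => if insub k is Some k' then eta k' else xi k.

(* Main.v *)
Require Import Defs.
From HB Require Import structures.
From mathcomp Require Import all_boot all_order all_algebra.
From mathcomp Require Import all_classical all_reals all_analysis.
From mathcomp Require Import finmap.
From mathcomp Require Import zify ring lra.
Import Order.TTheory GRing.Theory Num.Theory.
Import numFieldNormedType.Exports.
Local Open Scope classical_set_scope.
Local Open Scope ring_scope.
Section S.
Context (R : realType) (E : finType).

Definition agree (M : nat) (u v : Omega E) := forall k : int, `|k| <= M%:Z -> u k = v k.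

Lemma cyl_nbhs {v : Omega E} {U : set (Omega E)} : nbhs v U -> exists M : nat, forall x, agree M x v -> U x.
Proof.
pose G := filter_from [set: nat] (fun M => [set x : Omega E | agree M x v]).
have FG : Filter G.
  apply: filter_from_filter; first by exists 0%N.
  move=> i j _ _; exists (maxn i j) => // x /= h; split => k hk; apply: h;
   apply: (le_trans hk); rewrite lez_nat; lia.
have : G --> v.
  apply/(@pointwise_cvgP (discrete_topology int) (discrete_topology E)) => t.
  apply/discrete_cvg.
  exists `|t|%N => // x /= h; apply: h; by rewrite abszE.
move=> /(_ U) H /H [M _ HM]; exists M => x hx; exact: HM.
Qed.
Lemma proj_nbhs (v : Omega E) (k : int) : nbhs v [set x : Omega E | x k = v k].
Proof.
have := @proj_continuous int (fun _ => discrete_topology E) k v.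
move=> /(_ [set v k]) H; apply: H; exact: discrete_set1.
Qed.

Lemma agree_nbhs (v : Omega E) (M : nat) : nbhs v [set x : Omega E | agree M x v].
Proof.
elim: M => [|M IH].
  apply: filterS (proj_nbhs v 0) => x /= h k hk.
  have -> : k = 0 by lia.
  exact: h.
apply: filterS (filterI IH (filterI (proj_nbhs v M.+1%:Z) (proj_nbhs v (- M.+1%:Z)))).
move=> x [h1 [h2 h3]] k hk.
have : `|k| <= M%:Z \/ k = M.+1%:Z \/ k = - M.+1%:Z by lia.
by case=> [/h1|[->|->]].
Qed.

Lemma Omega_compact : compact [set: Omega E].
Proof.
have := @tychonoff int (fun _ => discrete_topology E) (fun _ => setT)
   (fun _ => @finite_compact (discrete_topology E) setT (@finite_finset E setT)).
by congr (compact _); rewrite eqEsubset.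
Qed.

Variable phi : Omega E -> R.
Hypothesis phi_cont : continuous phi.

Lemma UC (e : R) : 0 < e -> exists N : nat, forall u v, agree N u v -> `|phi u - phi v| < e.
Proof.
move=> e0; apply/not_existsP => H.
have /choice [uv Huv] : forall N : nat, exists p : Omega E * Omega E,
    agree N p.1 p.2 /\ e <= `|phi p.1 - phi p.2|.
  move=> N; have := H N; move=> /existsNP [u /existsNP [v /not_implyP [h1 h2]]].
  by exists (u, v); split => //=; rewrite leNgt; apply/negP.
pose F := (fun N => (uv N).1) @ \oo.
have [v [_ clv]] : [set: Omega E] `&` cluster F !=set0.
  by apply: Omega_compact; exact: filterT.
have /cvgrPdist_lt /(_ (e / 2)) := phi_cont v.
move=> /(_ ltac:(lra)) Hn.
have [M HM] := cyl_nbhs Hn.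
have FA : F [set x | exists N, (M <= N)%N /\ x = (uv N).1].
  by exists M => // N hN; exists N.
have [x [[N [hN ->]] hx]] := clv _ _ FA (agree_nbhs v M).
have [h1 h2] := Huv N.
have a2 : agree M (uv N).2 v.
  move=> k hk; rewrite -hx // -h1 //; apply: (le_trans hk); rewrite lez_nat //.
have := HM _ hx; have := HM _ a2 => /= b1 b2.
have : `|phi (uv N).1 - phi (uv N).2| < e.
  rewrite (_ : phi (uv N).1 - phi (uv N).2 = (phi v - phi (uv N).2) - (phi v - phi (uv N).1)); last by ring.
  apply: (le_lt_trans (ler_normB _ _)); lra.
by rewrite ltNge h2.
Qed.

Lemma omega_ext (u v : Omega E) : (forall k, u k = v k) -> u = v.
Proof. move=> h; exact: (@functional_extensionality_dep int (fun _ => E) u v h). Qed.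

Definition D (xi eta : Omega E) (i : int) : R := phi (shiftz i xi) - phi (shiftz i eta).
Definition W (F : int -> R) (c : int) (n : nat) : R :=
  \sum_(0 <= j < (2 * n).+1) F (j%:Z - n%:Z + c).

Lemma rho_shift xi eta k n : rho_n phi (shiftz k xi) (shiftz k eta) n = W (D xi eta) k n.
Proof.
apply: eq_bigr => j _; rewrite /D.
by congr (phi _ - phi _); apply: omega_ext => m; rewrite /shiftz !addrA.
Qed.

Lemma rho_W xi eta n : rho_n phi xi eta n = W (D xi eta) 0 n.
Proof. by apply: eq_bigr => j _; rewrite addr0. Qed.

Lemma W_step F c n : W F (c + 1) n - W F c n = F (n%:Z + 1 + c) - F (- n%:Z + c).
Proof.
rewrite /W.
pose H := fun j : nat => F (j%:Z - n%:Z + c).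
have e1 : \sum_(0 <= i < (2 * n).+2) H i = H 0%N + \sum_(0 <= i < (2 * n).+1) H i.+1
  := big_nat_recl _ _ _ (leq0n _).
have e2 : \sum_(0 <= i < (2 * n).+2) H i = \sum_(0 <= i < (2 * n).+1) H i + H (2 * n).+1
  := big_nat_recr _ _ _ (leq0n _).
rewrite e1 in e2; rewrite /H in e2.
have e3 : \sum_(0 <= j < (2 * n).+1) F (j%:Z - n%:Z + (c + 1)) =
          \sum_(0 <= j < (2 * n).+1) F ((j.+1)%:Z - n%:Z + c).
  by apply: eq_bigr => j _; congr F; lia.
rewrite e3.
have e4 : F ((0%N)%:Z - n%:Z + c) = F (- n%:Z + c) by congr F; lia.
have e5 : F (((2 * n).+1)%:Z - n%:Z + c) = F (n%:Z + 1 + c) by congr F; lia.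
rewrite e4 e5 in e2. 
move: e2; set A := \sum_(0 <= i < _) _; set B := \sum_(0 <= i < _) _ => e2.
have -> : A = B + F (n%:Z + 1 + c) - F (- n%:Z + c) by rewrite -e2; ring.
ring.
Qed.

Definition vanish (F : int -> R) := forall e, 0 < e -> exists N : nat,
  forall j : int, N%:Z < `|j| -> `|F j| < e.

Lemma vanish_comp F (g : nat -> int) : vanish F ->
  (forall N : nat, exists M : nat, forall n, (M <= n)%N -> N%:Z < `|g n|) ->
  (fun n => F (g n)) @ \oo --> 0.
Proof.
move=> vF hg; apply/cvgrPdist_lt => e e0.
have [N HN] := vF e e0; have [M HM] := hg N.
exists M => // n /= hn; rewrite sub0r normrN; exact/HN/HM.
Qed.

Lemma W_step_cvg F c : vanish F -> (fun n => W F (c + 1) n - W F c n) @ \oo --> 0.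
Proof.
move=> vF.
have -> : (fun n => W F (c + 1) n - W F c n) =
   (fun n => F (n%:Z + 1 + c)) - (fun n => F (- n%:Z + c)).
  by apply/funext => n; rewrite W_step.
rewrite -(subr0 0); apply: cvgB.
  apply: (@vanish_comp F (fun n : nat => n%:Z + 1 + c) vF) => N; exists (N + `|c|%N).+1 => n hn; lia.
apply: (@vanish_comp F (fun n : nat => - n%:Z + c) vF) => N; exists (N + `|c|%N).+1 => n hn; lia.
Qed.


Lemma cvg0D {a b : nat -> R} : a @ \oo --> 0 -> b @ \oo --> 0 -> (fun n => a n + b n) @ \oo --> 0.
Proof. by move=> ha hb; rewrite -(addr0 0); apply: cvgD. Qed.

Lemma W_diff F c : vanish F -> (fun n => W F c n - W F 0 n) @ \oo --> 0.
Proof.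
move=> vF.
have pos : forall k : nat, (fun n => W F k%:Z n - W F 0 n) @ \oo --> 0.
  elim=> [|k IH].
    have -> : (fun n => W F (0%N)%:Z n - W F 0 n) = (fun _ => 0).
      by apply/funext => n; rewrite subrr.
    exact: cvg_cst.
  have -> : (fun n => W F (k.+1)%:Z n - W F 0 n) =
     (fun n => (W F (k%:Z + 1) n - W F k%:Z n) + (W F k%:Z n - W F 0 n)).
    apply/funext => n /=; rewrite (_ : (k.+1)%:Z = k%:Z + 1); last by lia.
    ring.
  exact: (cvg0D (W_step_cvg F k%:Z vF) IH).
have neg : forall k : nat, (fun n => W F (- k%:Z) n - W F 0 n) @ \oo --> 0.
  elim=> [|k IH].
    have -> : (fun n => W F (- (0%N)%:Z) n - W F 0 n) = (fun _ => 0).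
      by apply/funext => n; rewrite oppr0 subrr.
    exact: cvg_cst.
  have -> : (fun n => W F (- (k.+1)%:Z) n - W F 0 n) =
     (fun n => - (W F (- (k.+1)%:Z + 1) n - W F (- (k.+1)%:Z) n) + (W F (- k%:Z) n - W F 0 n)).
    apply/funext => n /=; rewrite (_ : - (k.+1)%:Z + 1 = - k%:Z); last by lia.
    ring.
  apply: (cvg0D _ IH); rewrite -oppr0; apply: cvgN; exact: W_step_cvg F _ vF.
case: c => k; first exact: pos.
by rewrite NegzE; apply: neg.
Qed.

Lemma W_cvg_from {F c} : vanish F -> cvgn (W F c) ->
  cvgn (W F 0) /\ limn (W F 0) = limn (W F c).
Proof.
move=> vF /cvg_ex [l hl].
have h : (W F c - (fun n => W F c n - W F 0 n)) @ \oo --> l - 0.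
  by apply: cvgB => //; exact: W_diff.
rewrite subr0 in h.
have e : (W F c - (fun n => W F c n - W F 0 n)) = W F 0.
  by apply/funext => n; rewrite !fctE; ring.
rewrite e in h.
rewrite (cvg_lim (@Rhausdorff R) h) (cvg_lim (@Rhausdorff R) hl).
by split => //; apply/cvg_ex; exists l.
Qed.


Definition setk (k : int) (a : E) (v : Omega E) : Omega E :=
  fun m => if m == k then a else v m.

Lemma bound_seq {s : seq int} {k} : k \in s -> (absz k <= foldr maxn 0%N (map absz s))%N.
Proof.
elim: s => //= x s IH; rewrite inE => /orP [/eqP -> | /IH h]; lia.
Qed.

Lemma D_vanish xi eta (s : seq int) : (forall k, xi k <> eta k -> k \in s) -> vanish (D xi eta).
Proof.
move=> hs e e0; have [N HN] := @UC e e0.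
exists (N + foldr maxn 0%N (map absz s))%N => j hj; apply: HN => m hm.
rewrite /shiftz.
have [//|/eqP hne] := eqVneq (xi (m + j)) (eta (m + j)).
have := bound_seq (hs _ hne); lia.
Qed.

Lemma rho_split xi eta zeta n :
  rho_n phi xi zeta n = rho_n phi xi eta n + rho_n phi eta zeta n.
Proof. rewrite /rho_n -big_split; apply: eq_bigr => j _ /=; ring. Qed.

Lemma single_site xi eta k (g : Omega E -> R) :
  (forall m, m != k -> xi m = eta m) ->
  {uniform, (fun n => (fun w : Omega E => rho_n phi (upd0 w (xi k)) (upd0 w (eta k)) n)) @ \oo --> g} ->
  cvgn (rho_n phi xi eta) /\ limn (rho_n phi xi eta) = g (shiftz k xi).
Proof.
move=> hk hg.
have hu : upd0 (shiftz k xi) (xi k) = shiftz k xi.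
  apply: omega_ext => m; rewrite /upd0 /shiftz.
  by case: eqP => [->|//]; rewrite add0r.
have hv : upd0 (shiftz k xi) (eta k) = shiftz k eta.
  apply: omega_ext => m; rewrite /upd0 /shiftz.
  case: eqP => [->|/eqP hm]; first by rewrite add0r.
  apply: hk; apply/eqP => h; move/eqP: hm; apply; lia.
have : (fun n => rho_n phi (upd0 (shiftz k xi) (xi k)) (upd0 (shiftz k xi) (eta k)) n) @ \oo --> g (shiftz k xi).
  have H1 : {ptws, (fun n => (fun w : Omega E => rho_n phi (upd0 w (xi k)) (upd0 w (eta k)) n)) @ \oo --> g}.
    exact: pointwise_uniform_cvg.
  exact: ((@pointwise_cvgP (Omega E) R _ g _).1 H1 (shiftz k xi)).
rewrite hu hv.
have -> : (fun n => rho_n phi (shiftz k xi) (shiftz k eta) n) = W (D xi eta) k.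
  by apply/funext => n; rewrite rho_shift.
move=> hW.
have vD : vanish (D xi eta).
  apply: (@D_vanish _ _ [:: k]) => m hm; rewrite inE.
  by apply/eqP; apply: (contra_notP _ hm) => ne; apply: hk; apply/eqP.
have [c1 c2] := W_cvg_from vD (cvgP _ hW).
have -> : rho_n phi xi eta = W (D xi eta) 0 by apply/funext => n; rewrite rho_W.
by split => //; rewrite c2 (cvg_lim (@Rhausdorff R) hW).
Qed.


Lemma cont_coord (X : topologicalType) (f : X -> Omega E) :
  (forall k x, \forall y \near x, f y k = f x k) -> continuous f.
Proof.
move=> h x; apply/(@pointwise_cvgP (discrete_topology int) (discrete_topology E)) => t.
apply/discrete_cvg; exact: h.
Qed.

Lemma near_coord (X : topologicalType) (A : X -> Omega E) : continuous A ->
  forall m x, \forall y \near x, A y m = A x m.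
Proof. move=> cA m x; exact: (cA x _ (proj_nbhs (A x) m)). Qed.

Lemma comp_cont {X Y Z : topologicalType} {f : X -> Y} {g : Y -> Z} :
  continuous f -> continuous g -> continuous (fun x => g (f x)).
Proof. move=> cf cg x; exact: (cvg_comp _ _ (cf x) (cg (f x))). Qed.

Lemma shiftz_cont k : continuous (@shiftz E k).
Proof. apply: cont_coord => m x; exact: proj_nbhs. Qed.

Lemma upd0_cont a : continuous (fun w : Omega E => upd0 w a).
Proof.
apply: cont_coord => m x; rewrite /upd0; case: (m == 0); first by apply: (@nearW _ _ _ (nbhs_filter x)).
exact: proj_nbhs.
Qed.

Lemma cont_sum (X : topologicalType) (N : nat) (G : nat -> X -> R) :
  (forall j, continuous (G j)) -> continuous (fun x => \sum_(0 <= j < N) G j x).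
Proof.
move=> hG; elim: N => [|N IH].
  have -> : (fun x => \sum_(0 <= j < 0) G j x) = (fun _ => 0).
    by apply/funext => x; rewrite big_geq.
  exact: cst_continuous.
have -> : (fun x => \sum_(0 <= j < N.+1) G j x) = (fun x => \sum_(0 <= j < N) G j x + G N x).
  by apply/funext => x; rewrite big_nat_recr.
move=> x; apply: cvgD; [exact: IH | exact: hG].
Qed.

Lemma rho_upd_cont a b n : continuous (fun w : Omega E => rho_n phi (upd0 w a) (upd0 w b) n).
Proof.
apply: cont_sum => j x.
have h1 := comp_cont (comp_cont (upd0_cont a) (shiftz_cont (j%:Z - n%:Z))) phi_cont.
have h2 := comp_cont (comp_cont (upd0_cont b) (shiftz_cont (j%:Z - n%:Z))) phi_cont.
exact: (cvgB (h1 x) (h2 x)).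
Qed.

Lemma g_cont a b (g : Omega E -> R) :
  {uniform, (fun n => (fun w : Omega E => rho_n phi (upd0 w a) (upd0 w b) n)) @ \oo --> g} ->
  continuous g.
Proof.
move=> hg; apply: (uniform_limit_continuous _ _ hg).
exists 0%N => // n _; exact: rho_upd_cont.
Qed.


Hypothesis phi_ext : extensible phi.

Lemma rho_self u : rho_n phi u u = (fun _ => 0).
Proof. by apply/funext => n; apply: big1 => j _; rewrite subrr. Qed.

Lemma cvg_seq (s : seq int) : forall xi eta,
  (forall k, xi k <> eta k -> k \in s) -> cvgn (rho_n phi xi eta).
Proof.
elim: s => [|k s IH] xi eta hs.
  have -> : eta = xi.
    apply: omega_ext => m; case: (eqVneq (xi m) (eta m)) => [->//|/eqP ne].
    by have := hs m ne.
  rewrite rho_self; exact: is_cvg_cst.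
pose mid := setk k (eta k) xi.
have -> : rho_n phi xi eta = (fun n => rho_n phi xi mid n + rho_n phi mid eta n).
  by apply/funext => n; exact: rho_split.
apply: is_cvgD.
  have [g hg] := phi_ext (xi k) (mid k).
  have hk : forall m, m != k -> xi m = mid m.
    by move=> m hm; rewrite /mid /setk (negbTE hm).
  by have [c _] := single_site xi mid k g hk hg.
apply: IH => m hm.
have mk : m != k.
  by apply/eqP => e; apply: hm; rewrite e /mid /setk eqxx.
move: hm; rewrite /mid /setk (negbTE mk) => /hs.
by rewrite inE (negbTE mk).
Qed.

Lemma lim_split xi eta zeta (s : seq int) :
  (forall k, xi k <> eta k -> k \in s) -> (forall k, eta k <> zeta k -> k \in s) ->
  limn (rho_n phi xi zeta) = limn (rho_n phi xi eta) + limn (rho_n phi eta zeta).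
Proof.
move=> h1 h2.
have -> : rho_n phi xi zeta = (fun n => rho_n phi xi eta n + rho_n phi eta zeta n).
  by apply/funext => n; exact: rho_split.
apply: limD; [exact: (cvg_seq _ _ _ h1) | exact: (cvg_seq _ _ _ h2)].
Qed.


Lemma cont_seq (s : seq int) : forall A B : Omega E -> Omega E,
  continuous A -> continuous B ->
  (forall x k, k \notin s -> A x k = B x k) ->
  (forall x y k, k \in s -> A x k = A y k /\ B x k = B y k) ->
  continuous (fun x => limn (rho_n phi (A x) (B x))).
Proof.
elim: s => [|k s IH] A B cA cB hout hin.
  have -> : (fun x => limn (rho_n phi (A x) (B x))) = (fun _ => 0).
    apply/funext => x.
    have -> : B x = A x by apply: omega_ext => m; rewrite hout.
    by rewrite rho_self lim_cst.
  exact: cst_continuous.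
pose M x := setk k (B x k) (A x).
have cM : continuous M.
  apply: cont_coord => m x; rewrite /M /setk; case: (m == k).
    exact: (@near_coord _ _ cB k x).
  exact: (@near_coord _ _ cA m x).
have e : (fun x => limn (rho_n phi (A x) (B x))) =
   (fun x => limn (rho_n phi (A x) (M x)) + limn (rho_n phi (M x) (B x))).
  apply/funext => x; apply: (@lim_split _ _ _ (k :: s)).
    move=> m hm; rewrite inE; apply/orP; left; apply/eqP.
    by apply: (contra_notP _ hm) => /eqP mk; rewrite /M /setk (negbTE mk).
  move=> m hm; rewrite inE; case: (eqVneq m k) => [//|mk].
  rewrite /=; apply/negPn/negP => ms; apply: hm; rewrite /M /setk (negbTE mk).
  by apply: hout; rewrite inE negb_or mk ms.
have c2 : continuous (fun x => limn (rho_n phi (M x) (B x))).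
  apply: (IH M B cM cB).
    move=> y m ms; rewrite /M /setk; case: eqP => [->//|/eqP mk].
    by apply: hout; rewrite inE negb_or mk ms.
  move=> y z m ms; rewrite /M /setk.
  case: eqP => [->|_].
    by case: (hin y z k (mem_head _ _)).
  by apply: hin; rewrite inE ms orbT.
have c1 : continuous (fun x => limn (rho_n phi (A x) (M x))).
  move=> x.
  have [g hg] := phi_ext (A x k) (B x k).
  have eq : (fun y => limn (rho_n phi (A y) (M y))) = (fun y => g (shiftz k (A y))).
    apply/funext => y.
    have hk : forall m, m != k -> A y m = M y m.
      by move=> m mk; rewrite /M /setk (negbTE mk).
    have [ha hb'] := hin y x k (mem_head _ _).
    have hb : M y k = B x k by rewrite /M /setk eqxx.
    have hg' : {uniform, (fun n => (fun w : Omega E => rho_n phi (upd0 w (A y k)) (upd0 w (M y k)) n)) @ \oo --> g}.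
      by rewrite ha hb.
    by have [_ ->] := single_site (A y) (M y) k g hk hg'.
  have := comp_cont (comp_cont cA (shiftz_cont k)) (g_cont _ _ _ hg).
  by move/(_ x); rewrite -eq.
rewrite e => x; exact: (cvgD (c1 x) (c2 x)).
Qed.


Lemma W_lim_to F c : vanish F -> cvgn (W F 0) -> limn (W F c) = limn (W F 0).
Proof.
move=> vF /cvg_ex [l hl].
have h : ((fun n => W F c n - W F 0 n) + W F 0) @ \oo --> 0 + l.
  by apply: cvgD => //; exact: W_diff.
rewrite add0r in h.
have e : ((fun n => W F c n - W F 0 n) + W F 0) = W F c.
  by apply/funext => n; rewrite !fctE; ring.
rewrite e in h.
by rewrite (cvg_lim (@Rhausdorff R) h) (cvg_lim (@Rhausdorff R) hl).
Qed.

Lemma transl xi eta (s : seq int) : (forall k, xi k <> eta k -> k \in s) ->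
  limn (rho_n phi xi eta) = limn (rho_n phi (shiftz 1 xi) (shiftz 1 eta)).
Proof.
move=> hs.
have vD := D_vanish xi eta s hs.
have e0 : rho_n phi xi eta = W (D xi eta) 0 by apply/funext => n; rewrite rho_W.
have e1 : rho_n phi (shiftz 1 xi) (shiftz 1 eta) = W (D xi eta) 1.
  by apply/funext => n; rewrite rho_shift.
have c0 := cvg_seq s xi eta hs.
rewrite e0 in c0; rewrite e0 e1.
by rewrite (W_lim_to (D xi eta) 1 vD c0).
Qed.

Lemma glue_cont (L : {fset int}) (eta : L -> E) : continuous (fun xi : Omega E => glue_cfg eta xi).
Proof.
apply: cont_coord => m x; rewrite /glue_cfg; case: insubP => [u _ _|_].
  by apply: (@nearW _ _ _ (nbhs_filter x)).
exact: proj_nbhs.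
Qed.

Lemma part4 (L : {fset int}) (eta zeta : L -> E) :
  continuous (fun xi : Omega E => limn (rho_n phi (glue_cfg eta xi) (glue_cfg zeta xi))).
Proof.
apply: (@cont_seq (enum_fset L) (fun xi => glue_cfg eta xi) (fun xi => glue_cfg zeta xi)).
- exact: (glue_cont L eta).
- exact: (glue_cont L zeta).
- move=> x m hm; rewrite /glue_cfg; case: insubP => [u hu _|//].
  by rewrite hu in hm.
- move=> x y m hm; rewrite /glue_cfg; by case: insubP => [u _ _|/negP hn].
Qed.

End S.

Theorem proposition4p1 (R : realType) (E : finType) (phi : Omega E -> R)
  (phi_cont : continuous phi) (phi_ext : extensible phi) :
  (forall xi eta : Omega E, finite_set [set k | xi k <> eta k] ->
     cvgn (rho_n phi xi eta)) /\
  (forall xi eta zeta : Omega E,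
     finite_set [set k | ~ (xi k = eta k /\ eta k = zeta k)] ->
     limn (rho_n phi xi zeta) =
       limn (rho_n phi xi eta) + limn (rho_n phi eta zeta)) /\
  (forall xi eta : Omega E, finite_set [set k | xi k <> eta k] ->
     limn (rho_n phi xi eta) = limn (rho_n phi (shiftz 1 xi) (shiftz 1 eta))) /\
  (forall (L : {fset int}) (eta zeta : L -> E),
     continuous (fun xi : Omega E =>
       limn (rho_n phi (glue_cfg eta xi) (glue_cfg zeta xi)))).
Proof.
have fs : forall (P : int -> Prop), finite_set [set k | P k] ->
    exists s : seq int, forall k, P k -> k \in s.
  move=> P /finite_seqP [s es]; exists s => k hk.
  have : [set k | P k] k by [].
  by rewrite es.
split.
  move=> xi eta /fs [s hs]; exact: (@cvg_seq _ _ _ phi_cont phi_ext s xi eta hs).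
split.
  move=> xi eta zeta /fs [s hs].
  apply: (@lim_split _ _ _ phi_cont phi_ext _ _ _ s) => k hk; apply: hs => -[h1 h2].
    exact: hk.
  exact: hk.
split.
  move=> xi eta /fs [s hs]; exact: (@transl _ _ _ phi_cont phi_ext xi eta s hs).
move=> L eta zeta; exact: (@part4 _ _ _ phi_cont phi_ext L eta zeta).
Qed.
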